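(* Let $\widetilde{\mathsf{Op}}$ be the GPT associated with an operational theory, and for every system $X$ fix a linearly independent spanning set of states $\{\widetilde P^X_j\}_{j=1}^{m^X}$ and of effects $\{\widetilde E^X_i\}_{i=1}^{m^X}$. For a process $\widetilde T:A\to B$ let $\mathbf{N}_{\widetilde T}$ be the $m^B\times m^A$ matrix with entries $(\mathbf{N}_{\widetilde T})_{k,j}:=\widetilde E^B_k\circ\widetilde T\circ\widetilde P^A_j$, let $\mathbf{M}_{\widetilde{\mathbb 1}_X}:=\mathbf{N}_{\widetilde{\mathbb 1}_X}^{-1}$ (where $\widetilde{\mathbb 1}_X$ is the identity on $X$), and let $\mathbf{M}_{\widetilde T}:=\mathbf{M}_{\widetilde{\mathbb 1}_B}\mathbf{N}_{\widetilde T}\mathbf{M}_{\widetilde{\mathbb 1}_A}$ (matrix products). Then $\widetilde{\mathsf{Op}}$ is tomographically local if and only if every process $\widetilde T:A\to B$ decomposes as $$\widetilde T=\sum_{i=1}^{m^A}\sum_{l=1}^{m^B}(\mathbf{M}_{\widetilde T})_{l,i}\;\widetilde P^B_l\circ\widetilde E^A_i .$$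
   Context: A process theory consists of systems (closed under composition $\otimes$, with trivial system $I$) and processes, closed under sequential composition $\circ$ and parallel composition $\otimes$, with identities; processes $I\to A$ are states, $A\to I$ effects. An operational theory is a process theory of procedures with a probability rule $p$ assigning each closed diagram a value in $[0,1]$; procedures are operationally equivalent if they yield equal probabilities in every tester $\tau=(s,e,W)$ ($s:I\to A\otimes W$, $e:B\otimes W\to I$, giving $e\circ(T\otimes\mathrm{id}_W)\circ s$); finitely many testers suffice for each type. The associated GPT $\widetilde{\mathsf{Op}}$ has as processes the equivalence classes, composed via representatives; closed diagrams are real numbers; each class of type $A\to B$ is identified with its vector of probabilities on a finite tomographically complete set of testers, so linear combinations of processes are meaningful and composition extends bilinearly. For a system $X$ the states span a space of dimension $m^X$, as do the effects; a linearly independent spanning set of states (effects) is a basis of this span consisting of states (effects); the matrices $\mathbf{N}_{\widetilde{\mathbb 1}_X}$ are invertible. For an effect $E$ on $A$ and state $P$ of $B$, $P\circ E$ is the process $A\to B$ through the trivial system. $\widetilde{\mathsf{Op}}$ is tomographically local if any two processes of the same type (possibly with several input and output systems) giving equal probabilities for all products of states on the inputs and products of effects on the outputs are equal. *)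

(* Defs.v *)
(* An abstract (linearly extended) GPT, strictified:
   systems are finite lists of atomic systems, [::] is the trivial system I
   and the parallel composition of systems is list concatenation. *)
From HB Require Import structures.
From mathcomp Require Import all_boot all_order all_algebra.
From mathcomp Require Import reals.

Set Implicit Arguments.
Unset Strict Implicit.
Unset Printing Implicit Defensive.

Import GRing.Theory Num.Theory.
Local Open Scope ring_scope.

Record GPT (R : realType) := {
  Atom : Type;
  Proc : seq Atom -> seq Atom -> vectType R;
  seqc : forall {A B C : seq Atom}, Proc B C -> Proc A B -> Proc A C;
  parc : forall {A B C D : seq Atom}, Proc A B -> Proc C D -> Proc (A ++ C) (B ++ D);
  idp : forall (A : seq Atom), Proc A A;
  num : Proc [::] [::] -> R;
  comp_linl : forall A B C (h : Proc A B) (a : R) (f g : Proc B C),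
      seqc (a *: f + g) h = a *: seqc f h + seqc g h;
  comp_linr : forall A B C (f : Proc B C) (a : R) (g h : Proc A B),
      seqc f (a *: g + h) = a *: seqc f g + seqc f h;
  par_linl : forall A B C D (h : Proc C D) (a : R) (f g : Proc A B),
      parc (a *: f + g) h = a *: parc f h + parc g h;
  par_linr : forall A B C D (f : Proc A B) (a : R) (g h : Proc C D),
      parc f (a *: g + h) = a *: parc f g + parc f h;
  compA : forall A B C D (f : Proc C D) (g : Proc B C) (h : Proc A B),
      seqc f (seqc g h) = seqc (seqc f g) h;
  comp_idl : forall A B (f : Proc A B), seqc (idp B) f = f;
  comp_idr : forall A B (f : Proc A B), seqc f (idp A) = f;
  par_interchange : forall A B C A' B' C' (f : Proc B C) (g : Proc A B)
      (h : Proc B' C') (k : Proc A' B'),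
      parc (seqc f g) (seqc h k) = seqc (parc f h) (parc g k);
  par_idp : forall A B, parc (idp A) (idp B) = idp (A ++ B);
  par_unitl : forall A B (f : Proc A B), parc (idp [::]) f = f;
  num_lin : forall (a : R) (x y : Proc [::] [::]), num (a *: x + y) = a * num x + num y;
  num_bij : bijective num;
  num_comp : forall x y : Proc [::] [::], num (seqc x y) = num x * num y;
  num_par : forall x y : Proc [::] [::], num (parc x y) = num x * num y;
  num_id : num (idp [::]) = 1;
  (* processes are equivalence classes w.r.t. testers (s, e, W) *)
  tester_sep : forall A B (T T' : Proc A B),
      (forall (W : seq Atom) (s : Proc [::] (A ++ W)) (e : Proc (B ++ W) [::]),
          num (seqc e (seqc (parc T (idp W)) s))
          = num (seqc e (seqc (parc T' (idp W)) s))) -> T = T'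
}.

Arguments Atom {R}.
Arguments Proc {R}.
Arguments seqc {R G A B C} : rename.
Arguments parc {R G A B C D} : rename.
Arguments idp {R G} : rename.
Arguments num {R G} : rename.

Section Defs.
Variables (R : realType) (G : GPT R).

Fixpoint tensC (A : seq (Atom G)) (As : seq (seq (Atom G))) : seq (Atom G) :=
  match As with [::] => A | B :: Bs => A ++ tensC B Bs end.

Definition tensL (As : seq (seq (Atom G))) : seq (Atom G) :=
  match As with [::] => [::] | A :: As' => tensC A As' end.

Fixpoint prodstC (A : seq (Atom G)) (As : seq (seq (Atom G))) :
    Proc G [::] (tensC A As) -> Prop :=
  match As return Proc G [::] (tensC A As) -> Prop with
  | [::] => fun _ => True
  | B :: Bs => fun s => exists (a : Proc G [::] A) (b : Proc G [::] (tensC B Bs)),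
                  prodstC b /\ s = parc a b
  end.

Definition prod_state (As : seq (seq (Atom G))) : Proc G [::] (tensL As) -> Prop :=
  match As return Proc G [::] (tensL As) -> Prop with
  | [::] => fun s => s = idp [::]
  | A :: As' => @prodstC A As'
  end.

Fixpoint prodefC (A : seq (Atom G)) (As : seq (seq (Atom G))) :
    Proc G (tensC A As) [::] -> Prop :=
  match As return Proc G (tensC A As) [::] -> Prop with
  | [::] => fun _ => True
  | B :: Bs => fun e => exists (a : Proc G A [::]) (b : Proc G (tensC B Bs) [::]),
                  prodefC b /\ e = parc a b
  end.

Definition prod_effect (Bs : seq (seq (Atom G))) : Proc G (tensL Bs) [::] -> Prop :=
  match Bs return Proc G (tensL Bs) [::] -> Prop with
  | [::] => fun e => e = idp [::]
  | B :: Bs' => @prodefC B Bs'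
  end.

Definition tomographically_local : Prop :=
  forall (As Bs : seq (seq (Atom G))) (T T' : Proc G (tensL As) (tensL Bs)),
    (forall (s : Proc G [::] (tensL As)) (e : Proc G (tensL Bs) [::]),
        prod_state s -> prod_effect e ->
        num (seqc e (seqc T s)) = num (seqc e (seqc T' s))) ->
    T = T'.

Definition mdim (X : seq (Atom G)) : nat := \dim (fullv : {vspace Proc G [::] X}).

Variables (Pb : forall X, (mdim X).-tuple (Proc G [::] X))
          (Eb : forall X, (mdim X).-tuple (Proc G X [::])).

Definition Nmx A B (T : Proc G A B) : 'M[R]_(mdim B, mdim A) :=
  \matrix_(k < mdim B, j < mdim A) num (seqc (tnth (Eb B) k) (seqc T (tnth (Pb A) j))).

Definition Mid X : 'M[R]_(mdim X) := invmx (Nmx (idp X)).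

Definition Mmx A B (T : Proc G A B) : 'M[R]_(mdim B, mdim A) :=
  Mid B *m Nmx T *m Mid A.

End Defs.

Arguments mdim {R G} X.
Arguments tomographically_local {R} G.

(* Main.v *)
Require Import Defs.
From HB Require Import structures.
From mathcomp Require Import all_boot all_order all_algebra.
From mathcomp Require Import reals.
From mathcomp Require Import ring.
Import GRing.Theory Num.Theory.
Local Open Scope ring_scope.

Set Implicit Arguments.
Unset Strict Implicit.
Section Aux.
Variables (R : realType) (G : GPT R).

Lemma dbl0 (V : zmodType) (x : V) : x = x + x -> x = 0.
Proof.
move=> e; have := congr1 (fun y => y - x) e; rewrite /= addrK subrr => ->.
by [].
Qed.

Definition lfun {V : lmodType R} (f : V -> R) :=
  forall a x y, f (a *: x + y) = a * f x + f y.

Lemma lf0 (V : lmodType R) (f : V -> R) : lfun f -> f 0 = 0.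
Proof. by move=> H; apply: dbl0; have := H 1 0 0; rewrite scaler0 addr0 mul1r. Qed.

Lemma lfD (V : lmodType R) (f : V -> R) : lfun f -> forall x y, f (x + y) = f x + f y.
Proof. by move=> H x y; have := H 1 x y; rewrite scale1r mul1r. Qed.

Lemma lfZ (V : lmodType R) (f : V -> R) : lfun f -> forall a x, f (a *: x) = a * f x.
Proof. by move=> H a x; have := H a x 0; rewrite addr0 (lf0 H) addr0. Qed.

Lemma lf_sum (V : lmodType R) (f : V -> R) : lfun f ->
  forall (I : Type) (r : seq I) (P : pred I) (F : I -> V),
  f (\sum_(i <- r | P i) F i) = \sum_(i <- r | P i) f (F i).
Proof. by move=> H; apply: big_morph; [exact: lfD | exact: lf0]. Qed.

Lemma basis_lf (V : vectType R) n (X : n.-tuple V) (f : V -> R) :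
  basis_of fullv X -> lfun f -> (forall i, f (tnth X i) = 0) -> forall v, f v = 0.
Proof.
move=> /andP[/eqP hX _] lf H v.
have hv : v \in <<X>>%VS by rewrite hX memvf.
rewrite (coord_span hv) (lf_sum lf) big1 // => i _.
by rewrite (lfZ lf) -(tnth_nth 0) H mulr0.
Qed.

Lemma seqc0l A B C (h : Proc G A B) : seqc (0 : Proc G B C) h = 0.
Proof. by apply: dbl0; have := comp_linl h 1 (0 : Proc G B C) 0; rewrite !scale1r addr0. Qed.
Lemma seqc0r A B C (f : Proc G B C) : seqc f (0 : Proc G A B) = 0.
Proof. by apply: dbl0; have := comp_linr f 1 (0 : Proc G A B) 0; rewrite !scale1r addr0. Qed.
Lemma seqcDl A B C (h : Proc G A B) (f g : Proc G B C) : seqc (f + g) h = seqc f h + seqc g h.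
Proof. by have := comp_linl h 1 f g; rewrite !scale1r. Qed.
Lemma seqcDr A B C (f : Proc G B C) (g h : Proc G A B) : seqc f (g + h) = seqc f g + seqc f h.
Proof. by have := comp_linr f 1 g h; rewrite !scale1r. Qed.
Lemma seqcZl A B C (h : Proc G A B) a (f : Proc G B C) : seqc (a *: f) h = a *: seqc f h.
Proof. by have := comp_linl h a f 0; rewrite addr0 seqc0l addr0. Qed.
Lemma seqcZr A B C (f : Proc G B C) a (g : Proc G A B) : seqc f (a *: g) = a *: seqc f g.
Proof. by have := comp_linr f a g 0; rewrite addr0 seqc0r addr0. Qed.

Lemma parc0l A B C D (h : Proc G C D) : parc (0 : Proc G A B) h = 0.
Proof. by apply: dbl0; have := par_linl h 1 (0 : Proc G A B) 0; rewrite !scale1r addr0. Qed.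
Lemma parc0r A B C D (f : Proc G A B) : parc f (0 : Proc G C D) = 0.
Proof. by apply: dbl0; have := par_linr f 1 (0 : Proc G C D) 0; rewrite !scale1r addr0. Qed.
Lemma parcDl A B C D (h : Proc G C D) (f g : Proc G A B) : parc (f + g) h = parc f h + parc g h.
Proof. by have := par_linl h 1 f g; rewrite !scale1r. Qed.
Lemma parcZl A B C D (h : Proc G C D) a (f : Proc G A B) : parc (a *: f) h = a *: parc f h.
Proof. by have := par_linl h a f 0; rewrite addr0 parc0l addr0. Qed.

Lemma seqc_suml A B C (h : Proc G A B) (I : Type) (r : seq I) (P : pred I) (F : I -> Proc G B C) :
  seqc (\sum_(i <- r | P i) F i) h = \sum_(i <- r | P i) seqc (F i) h.
Proof. by apply: (big_morph (fun x => seqc x h)); [exact: seqcDl | exact: seqc0l]. Qed.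
Lemma seqc_sumr A B C (f : Proc G B C) (I : Type) (r : seq I) (P : pred I) (F : I -> Proc G A B) :
  seqc f (\sum_(i <- r | P i) F i) = \sum_(i <- r | P i) seqc f (F i).
Proof. by apply: (big_morph (fun x => seqc f x)); [exact: seqcDr | exact: seqc0r]. Qed.
Lemma parc_suml A B C D (h : Proc G C D) (I : Type) (r : seq I) (P : pred I) (F : I -> Proc G A B) :
  parc (\sum_(i <- r | P i) F i) h = \sum_(i <- r | P i) parc (F i) h.
Proof. by apply: (big_morph (fun x => parc x h)); [exact: parcDl | exact: parc0l]. Qed.

Lemma num_lf : lfun (@num R G).
Proof. by move=> a x y; rewrite num_lin. Qed.

Lemma scalE (x : Proc G [::] [::]) : x = num x *: idp [::].
Proof.
have [g gK _] := num_bij G.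
apply: (can_inj gK).
by rewrite (lfZ num_lf) num_id mulr1.
Qed.

Lemma parc_state X Y (P : Proc G [::] X) (b : Proc G [::] Y) :
  seqc (parc P (idp Y)) b = parc P b.
Proof.
have := par_interchange P (idp [::]) (idp Y) b.
by rewrite comp_idr comp_idl par_unitl => e; exact: (esym e).
Qed.

Lemma parc_effect X Y (E : Proc G X [::]) (e : Proc G Y [::]) :
  seqc e (parc E (idp Y)) = parc E e.
Proof.
have := par_interchange (idp [::]) E e (idp Y).
by rewrite comp_idr comp_idl par_unitl => e'; exact: (esym e').
Qed.

End Aux.

Section Main.
Variables (R : realType) (G : GPT R)
    (Pb : forall X : seq (Atom G), (mdim X).-tuple (Proc G [::] X))
    (Eb : forall X : seq (Atom G), (mdim X).-tuple (Proc G X [::])).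
Hypothesis Hdec : forall (A B : seq (Atom G)) (T : Proc G A B),
     T = \sum_(i < mdim A) \sum_(l < mdim B)
           (Mmx Pb Eb T) l i *: seqc (tnth (Pb B) l) (tnth (Eb A) i).

Lemma state_split X Y (s : Proc G [::] (X ++ Y)) :
  s = \sum_(i < mdim X) \sum_(l < mdim X) (Mmx Pb Eb (idp X)) l i *:
        parc (tnth (Pb X) l) (seqc (parc (tnth (Eb X) i) (idp Y)) s).
Proof.
transitivity (seqc (parc (idp X) (idp Y)) s); first by rewrite par_idp comp_idl.
rewrite {1}(Hdec (idp X)) parc_suml seqc_suml; apply: eq_bigr => i _.
rewrite parc_suml seqc_suml; apply: eq_bigr => l _.
rewrite parcZl seqcZl; congr (_ *: _).
by rewrite -{1}(comp_idl (idp Y)) par_interchange -Defs.compA parc_state.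
Qed.

Lemma effect_split X Y (e : Proc G (X ++ Y) [::]) :
  e = \sum_(i < mdim X) \sum_(l < mdim X) (Mmx Pb Eb (idp X)) l i *:
        parc (tnth (Eb X) i) (seqc e (parc (tnth (Pb X) l) (idp Y))).
Proof.
transitivity (seqc e (parc (idp X) (idp Y))); first by rewrite par_idp comp_idr.
rewrite {1}(Hdec (idp X)) parc_suml seqc_sumr; apply: eq_bigr => i _.
rewrite parc_suml seqc_sumr; apply: eq_bigr => l _.
rewrite parcZl seqcZr; congr (_ *: _).
by rewrite -{1}(comp_idl (idp Y)) par_interchange Defs.compA parc_effect.
Qed.

Lemma lf_stateC As : forall A (f : Proc G [::] (tensC A As) -> R), lfun f ->
  (forall s, prodstC s -> f s = 0) -> forall s, f s = 0.
Proof.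
elim: As => [|B Bs IH] A f lf H s; first by apply: H.
rewrite (@state_split A (tensC B Bs) s) (lf_sum lf) big1 // => i _.
rewrite (lf_sum lf) big1 // => l _.
rewrite (lfZ lf).
set b := seqc _ s.
suff -> : f (parc (tnth (Pb A) l) b) = 0 by rewrite mulr0.
move: b; apply: (IH B (fun b => f (parc (tnth (Pb A) l) b))).
  by move=> a x y; rewrite par_linr lf.
move=> b pb; apply: H; by exists (tnth (Pb A) l), b.
Qed.

Lemma lf_effectC As : forall A (f : Proc G (tensC A As) [::] -> R), lfun f ->
  (forall e, prodefC e -> f e = 0) -> forall e, f e = 0.
Proof.
elim: As => [|B Bs IH] A f lf H e; first by apply: H.
rewrite (@effect_split A (tensC B Bs) e) (lf_sum lf) big1 // => i _.
rewrite (lf_sum lf) big1 // => l _.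
rewrite (lfZ lf).
set b := seqc e _.
suff -> : f (parc (tnth (Eb A) i) b) = 0 by rewrite mulr0.
move: b; apply: (IH B (fun b => f (parc (tnth (Eb A) i) b))).
  by move=> a x y; rewrite par_linr lf.
move=> b pb; apply: H; by exists (tnth (Eb A) i), b.
Qed.

Lemma lf_state As (f : Proc G [::] (tensL As) -> R) : lfun f ->
  (forall s, prod_state s -> f s = 0) -> forall s, f s = 0.
Proof.
case: As f => [|A As] f lf H s; last exact: (lf_stateC lf).
by rewrite (scalE s) (lfZ lf) H ?mulr0.
Qed.

Lemma lf_effect As (f : Proc G (tensL As) [::] -> R) : lfun f ->
  (forall e, prod_effect e -> f e = 0) -> forall e, f e = 0.
Proof.
case: As f => [|A As] f lf H e; last exact: (lf_effectC lf).
by rewrite (scalE e) (lfZ lf) H ?mulr0.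
Qed.

End Main.

Lemma num_comp3 (R : realType) (G : GPT R) A B (E : Proc G B [::]) (P : Proc G [::] B)
   (E' : Proc G A [::]) (P' : Proc G [::] A) :
  num (seqc E (seqc (seqc P E') P')) = num (seqc E P) * num (seqc E' P').
Proof. by rewrite -Defs.compA Defs.compA num_comp. Qed.

Theorem corollary1 (R : realType) (G : GPT R)
    (Pb : forall X : seq (Atom G), (mdim X).-tuple (Proc G [::] X))
    (Eb : forall X : seq (Atom G), (mdim X).-tuple (Proc G X [::]))
    (hPb : forall X, basis_of fullv (Pb X))
    (hEb : forall X, basis_of fullv (Eb X))
    (hN : forall X, Nmx Pb Eb (idp X) \in unitmx) :
  tomographically_local G <->
  (forall (A B : seq (Atom G)) (T : Proc G A B),
     T = \sum_(i < mdim A) \sum_(l < mdim B)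
           (Mmx Pb Eb T) l i *: seqc (tnth (Pb B) l) (tnth (Eb A) i)).
Proof.
split.
- move=> TL A B T.
  set T0 := (X in T = X).
  apply: (TL [:: A] [:: B]) => s e _ _.
  have E1 : Nmx Pb Eb (idp B) *m Mmx Pb Eb T *m Nmx Pb Eb (idp A) = Nmx Pb Eb T.
    by rewrite /Mmx /Mid !mulmxA mulmxKV // mulmxV // mul1mx.
  have Hkj : forall k j, num (seqc (tnth (Eb B) k) (seqc T (tnth (Pb A) j)))
                     = num (seqc (tnth (Eb B) k) (seqc T0 (tnth (Pb A) j))).
    move=> k j.
    have := congr1 (fun M : 'M[R]_(mdim B, mdim A) => M k j) E1.
    rewrite [in RHS]mxE => <-.
    rewrite /T0 seqc_suml seqc_sumr (lf_sum (@num_lf _ _)) mxE.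
    apply: eq_bigr => i _.
    rewrite mxE mulr_suml seqc_suml seqc_sumr (lf_sum (@num_lf _ _)).
    apply: eq_bigr => l _.
    rewrite seqcZl seqcZr (lfZ (@num_lf _ _)) num_comp3 !mxE comp_idl comp_idl.
    by ring.
  apply/eqP; rewrite -subr_eq0; apply/eqP.
  move: s; apply: (basis_lf (hPb A) (f := fun s => num (seqc e (seqc T s)) - num (seqc e (seqc T0 s)))).
    by move=> a x y; rewrite !comp_linr !num_lin; ring.
  move=> j; move: e.
  apply: (basis_lf (hEb B) (f := fun e => num (seqc e (seqc T (tnth (Pb A) j))) - num (seqc e (seqc T0 (tnth (Pb A) j))))).
    by move=> a x y; rewrite !comp_linl !num_lin; ring.
  by move=> k; rewrite /= Hkj subrr.
- move=> Hdec As Bs T T' H.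
  have H1 : forall e, prod_effect e -> forall s,
      num (seqc e (seqc T s)) - num (seqc e (seqc T' s)) = 0.
    move=> e pe.
    apply: (@lf_state _ _ Pb Eb Hdec _ (fun s => num (seqc e (seqc T s)) - num (seqc e (seqc T' s)))).
      by move=> a x y; rewrite !comp_linr !num_lin; ring.
    by move=> s ps; rewrite /= (H s e ps pe) subrr.
  have key : forall s e, num (seqc e (seqc T s)) = num (seqc e (seqc T' s)).
    move=> s e; apply/eqP; rewrite -subr_eq0; apply/eqP; move: e.
    apply: (@lf_effect _ _ Pb Eb Hdec _ (fun e => num (seqc e (seqc T s)) - num (seqc e (seqc T' s)))).
      by move=> a x y; rewrite !comp_linl !num_lin; ring.
    by move=> e pe; apply: H1.
  have HN : Nmx Pb Eb T = Nmx Pb Eb T' by apply/matrixP => k j; rewrite !mxE key.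
  have HM : Mmx Pb Eb T = Mmx Pb Eb T' by rewrite /Mmx HN.
  by rewrite (Hdec _ _ T) HM -(Hdec _ _ T').
Qed.
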